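(* Let $n\ge1$, let $H_n:\mathbb{Z}^n\to\mathbb{R}$ be a finitely supported kernel and $x,y:\mathbb{Z}\to\mathbb{R}$ finitely supported signals. Then $$\big\|H_n*(x+y)^n-H_n*x^n\big\|_2\le\min\left(\|H_n\|_2\sum_{k=0}^{n-1}\Big(\frac{en}{k}\Big)^k\|x\|_1^k\|y\|_1^{n-k},\ \|H_n\|_1\sum_{k=0}^{n-1}\Big(\frac{en}{k}\Big)^k\|x\|_{2k}^k\|y\|_{2(n-k)}^{n-k}\right),$$ where $e$ is the base of the natural logarithm.
   Context: For a kernel $H:\mathbb{Z}^n\to\mathbb{R}$ and signals $x_1,\dots,x_n:\mathbb{Z}\to\mathbb{R}$, the order-$n$ convolution is $(H*[x_1,\dots,x_n])(t)=\sum_{(\tau_1,\dots,\tau_n)\in\mathbb{Z}^n}H(\tau_1,\dots,\tau_n)\prod_{i=1}^n x_i(t-\tau_i)$, and $H*x^n$ denotes $H*[x,\dots,x]$ ($n$ copies). For a function $A$ on $\mathbb{Z}^d$, $\|A\|_p=(\sum_\tau|A(\tau)|^p)^{1/p}$. In the $k=0$ terms, $(en/k)^k$ and $\|x\|_{2k}^k$ are interpreted as $1$. *)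

(* Defs.v *)
From HB Require Import structures.
From mathcomp Require Import all_boot all_order all_algebra.
From mathcomp Require Import all_classical all_reals.
From mathcomp Require Import all_analysis.
Set Implicit Arguments. Unset Strict Implicit. Unset Printing Implicit Defensive.
Import Order.TTheory GRing.Theory Num.Theory.
Local Open Scope classical_set_scope.
Local Open Scope ring_scope.

Notation Zn n := {ffun 'I_n -> int}.

Definition fin_supp (T : Type) (R : realType) (f : T -> R) : Prop :=
  finite_set [set t | f t != 0].

Definition lpnorm (R : realType) (T : choiceType) (p : nat) (A : T -> R) : R :=
  powR (\sum_(t \in [set: T]) `|A t| ^+ p) (p%:R^-1).

Definition convn (R : realType) (n : nat) (H : Zn n -> R)
    (xs : 'I_n -> int -> R) (t : int) : R :=
  \sum_(tau \in [set: Zn n]) H tau * \prod_(i < n) xs i (t - tau i).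

Definition convpow (R : realType) (n : nat) (H : Zn n -> R) (x : int -> R)
    : int -> R := convn H (fun _ => x).

(* Main.v *)
Require Import Defs.
From HB Require Import structures.
From mathcomp Require Import all_boot all_order all_algebra.
From mathcomp Require Import all_classical all_reals.
From mathcomp Require Import all_analysis.
From mathcomp Require Import finmap ring lra.
Import Order.TTheory GRing.Theory Num.Theory.
Local Open Scope ring_scope.

Section Aux.
Local Open Scope classical_set_scope.
Local Open Scope ring_scope.
Variable R : realType.

Lemma sum_sub_le (T : eqType) (s r : seq T) (F : T -> R) :
  uniq s -> {subset s <= r} -> uniq r -> (forall i, i \in r -> 0 <= F i) ->
  \sum_(i <- s) F i <= \sum_(i <- r) F i.
Proof.
move=> us sr ur F0.
have -> : \sum_(i <- s) F i = \sum_(i <- r | i \in s) F i.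
  rewrite -[RHS]big_filter; apply: perm_big; apply: uniq_perm.
  - exact: us.
  - exact: filter_uniq.
  move=> i; rewrite mem_filter; apply/idP/andP => [his|[]//]; split => //.
  exact: sr.
rewrite [X in _ <= X](bigID (fun i => i \in s)) /= lerDl big_seq_cond sumr_ge0 // => i /andP[ir _]; exact: F0.
Qed.

Lemma fsum_le_seq (T : choiceType) (F : T -> R) (B : R) :
  (forall s : seq T, uniq s -> \sum_(t <- s) F t <= B) ->
  \sum_(t \in [set: T]) F t <= B.
Proof. by move=> h; apply: h. Qed.

Lemma seq_le_fsum (T : choiceType) (F : T -> R) (s : seq T) :
  (forall t, 0 <= F t) -> finite_set [set t | F t != 0] -> uniq s ->
  \sum_(t <- s) F t <= \sum_(t \in [set: T]) F t.
Proof.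
move=> F0 fin us.
case: finite_supportP.
  move=> inf; exfalso; apply: inf.
  apply: sub_finite_set fin => t [_ /= h]; exact/eqP.
move=> X _ Xidx _.
rewrite (bigID (fun t => t \in X)) /= [X in _ + X]big1 ?addr0; last first.
  by move=> i /negbTE hi; apply: Xidx => //; rewrite hi.
rewrite -big_filter; apply: sum_sub_le => //.
- exact: filter_uniq.
by move=> i; rewrite mem_filter => /andP[].
Qed.

Lemma seq_shift_le (F : int -> R) (c : int) (s : seq int) :
  (forall t, 0 <= F t) -> finite_set [set t | F t != 0] -> uniq s ->
  \sum_(t <- s) F (t - c) <= \sum_(t \in [set: int]) F t.
Proof.
move=> F0 fin us.
rewrite -(big_map (fun t => t - c) predT F).
apply: seq_le_fsum => //.
rewrite map_inj_uniq // => a b /eqP; rewrite (inj_eq (addIr _)) => /eqP //.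
Qed.

Lemma lpnorm_ge0 (T : choiceType) p (A : T -> R) : 0 <= lpnorm p A.
Proof. exact: powR_ge0. Qed.

Lemma lpnormX (T : choiceType) p (A : T -> R) : (0 < p)%N ->
  lpnorm p A ^+ p = \sum_(t \in [set: T]) `|A t| ^+ p.
Proof.
move=> p0; rewrite /lpnorm -powR_mulrn ?powR_ge0 // -powRrM mulVf ?powRr1 //.
  by apply: fsumr_ge0 => t _; rewrite exprn_ge0.
by rewrite pnatr_eq0 -lt0n.
Qed.

Lemma fin_supp_pow (T : choiceType) p (A : T -> R) : (0 < p)%N -> fin_supp A ->
  finite_set [set t | `|A t| ^+ p != 0].
Proof.
move=> p0 fin; apply: sub_finite_set fin => t /=; apply: contra => /eqP ->.
by rewrite normr0 expr0n; case: p p0.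
Qed.

Lemma lpnorm_pt (T : choiceType) p (A : T -> R) (u : T) : (0 < p)%N ->
  fin_supp A -> `|A u| <= lpnorm p A.
Proof.
move=> p0 fin.
rewrite -(ler_pXn2r p0) ?nnegrE ?lpnorm_ge0 // lpnormX //.
have := @seq_le_fsum T (fun t => `|A t| ^+ p) [:: u].
rewrite big_seq1; apply => //; last exact: fin_supp_pow.
Qed.

Lemma CS_w (I : Type) (r : seq I) (w a b : I -> R) :
  (forall i, 0 <= w i) ->
  (\sum_(i <- r) w i * a i * b i) ^+ 2 <=
  (\sum_(i <- r) w i * a i ^+ 2) * (\sum_(i <- r) w i * b i ^+ 2).
Proof.
move=> w0.
set SA := \sum_(i <- r) w i * a i ^+ 2.
set SB := \sum_(i <- r) w i * b i ^+ 2.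
set SC := \sum_(i <- r) w i * a i * b i.
have E : \sum_(i <- r) \sum_(j <- r) w i * w j * (a i * b j - a j * b i) ^+ 2
   = (SA * SB - SC ^+ 2) *+ 2.
  have e1 : forall i j, w i * w j * (a i * b j - a j * b i) ^+ 2 =
     (w i * a i ^+ 2) * (w j * b j ^+ 2) + (w j * a j ^+ 2) * (w i * b i ^+ 2)
     - ((w i * a i * b i) * (w j * a j * b j)) *+ 2.
    by move=> i j; ring.
  under eq_bigr do under eq_bigr do rewrite e1.
  under eq_bigr do rewrite sumrB big_split /=.
  rewrite sumrB big_split /=.
  rewrite [X in _ + X - _]exchange_big /=.
  have p1 : \sum_(i <- r) \sum_(j <- r) (w i * a i ^+ 2) * (w j * b j ^+ 2) = SA * SB.
    by rewrite /SA /SB mulr_suml; apply: eq_bigr => i _; rewrite mulr_sumr.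
  have p2 : \sum_(j <- r) \sum_(i <- r) (w i * a i ^+ 2) * (w j * b j ^+ 2) = SA * SB.
    by rewrite -p1 exchange_big.
  have p3 : \sum_(i <- r) \sum_(j <- r) ((w i * a i * b i) * (w j * a j * b j)) *+ 2
     = SC ^+ 2 *+ 2.
    rewrite expr2 /SC mulr_suml -sumrMnl; apply: eq_bigr => i _.
    by rewrite sumrMnl mulr_sumr.
  rewrite p1 p3.
  by rewrite !mulr2n; ring.
have : 0 <= (SA * SB - SC ^+ 2) *+ 2.
  rewrite -E; apply: sumr_ge0 => i _; apply: sumr_ge0 => j _.
  by apply: mulr_ge0; [apply: mulr_ge0|apply: sqr_ge0].
by rewrite pmulrn_lge0 // subr_ge0.
Qed.

Lemma Mink2 (s : seq int) (g h : int -> R) (a b : R) :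
  0 <= a -> 0 <= b ->
  \sum_(t <- s) g t ^+ 2 <= a ^+ 2 -> \sum_(t <- s) h t ^+ 2 <= b ^+ 2 ->
  \sum_(t <- s) (g t + h t) ^+ 2 <= (a + b) ^+ 2.
Proof.
move=> a0 b0 hg hh.
set C := \sum_(i <- s) g i * h i.
have cs : C ^+ 2 <= (\sum_(t <- s) g t ^+ 2) * (\sum_(t <- s) h t ^+ 2).
  have := @CS_w _ s (fun=> 1) g h (fun=> ler01).
  have e1 : \sum_(i <- s) 1 * g i * h i = C by apply: eq_bigr => i _; rewrite mul1r.
  have e2 : forall f : int -> R, \sum_(i <- s) 1 * f i ^+ 2 = \sum_(i <- s) f i ^+ 2.
    by move=> f; apply: eq_bigr => i _; rewrite mul1r.
  by rewrite e1 !e2.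
have hC : C <= a * b.
  have : C ^+ 2 <= (a * b) ^+ 2.
    apply: le_trans cs _; rewrite exprMn; apply: ler_pM => //; apply: sumr_ge0 => *; exact: sqr_ge0.
  have : 0 <= a * b by exact: mulr_ge0.
  move=> P0 hsq; nra.
have -> : \sum_(t <- s) (g t + h t) ^+ 2 =
   \sum_(t <- s) g t ^+ 2 + \sum_(t <- s) h t ^+ 2 + C *+ 2.
  rewrite /C -sumrMnl -!big_split /=; apply: eq_bigr => i _; ring.
set G := \sum_(t <- s) g t ^+ 2 in hg *.
set K := \sum_(t <- s) h t ^+ 2 in hh *.
rewrite mulr2n; nra.
Qed.

Lemma MinkN (J : Type) (r : seq J) (P : pred J) (G : J -> int -> R) (b : J -> R)
    (s : seq int) :
  (forall j, P j -> 0 <= b j) ->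
  (forall j, P j -> \sum_(t <- s) G j t ^+ 2 <= b j ^+ 2) ->
  \sum_(t <- s) (\sum_(j <- r | P j) G j t) ^+ 2 <= (\sum_(j <- r | P j) b j) ^+ 2.
Proof.
move=> b0 hG; elim: r => [|j r IH].
  by under eq_bigr do rewrite big_nil; rewrite big_nil expr0n /= big1 // => *; rewrite expr0n.
under eq_bigr => t _ do rewrite big_cons. rewrite [in X in _ <= X]big_cons.
case: ifP => Pj //.
apply: Mink2 => //; first exact: b0.
  by apply: sumr_ge0 => i; exact: b0.
exact: hG.
Qed.

Lemma AMGM (I : finType) (A : pred I) (c : I -> R) :
  (forall i, 0 <= c i) -> (0 < #|A|)%N ->
  \prod_(i in A) c i <= (\sum_(i in A) c i ^+ #|A|) / #|A|%:R.
Proof.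
move=> c0 A0.
have h := Order.le_of_leif (@leif_AGM R I A (fun i => c i ^+ #|A|) (fun i _ => exprn_ge0 _ (c0 i))).
rewrite prodrXl in h.
rewrite -(ler_pXn2r A0) ?nnegrE //.
- exact: prodr_ge0.
- by rewrite divr_ge0 // sumr_ge0 // => i _; rewrite exprn_ge0.
Qed.

End Aux.

Section Comb.
Local Open Scope classical_set_scope.
Local Open Scope ring_scope.
Variable R : realType.

Lemma ffact_le_exp n k : (n ^_ k <= n ^ k)%N.
Proof.
elim: k => [//|k IH]; rewrite ffactnSr expnSr; apply: leq_mul => //; exact: leq_subr.
Qed.

Lemma binom_bound n k : ('C(n, k)%:R : R) <= (expR 1 * n%:R / k%:R) ^+ k.
Proof.
case: k => [|k]; first by rewrite bin0 expr0.
set K := k.+1.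
have hF : (0 : R) < K`!%:R by rewrite ltr0n fact_gt0.
have hK : (0 : R) < K%:R ^+ K by rewrite exprn_gt0 // ltr0n.
have h1 : ('C(n, K)%:R : R) * K`!%:R <= n%:R ^+ K.
  by rewrite -natrM bin_ffact -natrX ler_nat ffact_le_exp.
have h2 : K%:R ^+ K / K`!%:R <= expR 1 ^+ K :> R.
  have := @expR_ge1Dxn R K%:R k (ler0n _ _).
  rewrite -expRM_natl mulr1 => h; apply: le_trans h; rewrite lerDr //.
have -> : (expR 1 * n%:R / K%:R) ^+ K = expR 1 ^+ K * n%:R ^+ K / K%:R ^+ K :> R.
  by rewrite !exprMn exprVn.
rewrite ler_pdivlMr //.
have -> : ('C(n, K)%:R : R) * K%:R ^+ K = ('C(n, K)%:R * K`!%:R) * (K%:R ^+ K / K`!%:R).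
  by field; rewrite gt_eqF.
rewrite mulrC; apply: ler_pM => //.
Qed.

Lemma count_sets n (g : nat -> R) :
  \sum_(A : {set 'I_n} | A != [set: 'I_n]%SET) g #|A| =
  \sum_(0 <= k < n) 'C(n, k)%:R * g k.
Proof.
have cardle : forall A : {set 'I_n}, (#|A| < n.+1)%N.
  by move=> A; rewrite ltnS -[X in (_ <= X)%N](card_ord n) max_card.
rewrite (partition_big (fun A : {set 'I_n} => (inord #|A| : 'I_n.+1))
   (fun j : 'I_n.+1 => (j < n)%N)); last first.
  move=> A; rewrite -properT => /proper_card; rewrite cardsT card_ord.
  by rewrite inordK.
rewrite big_mkcond big_ord_recr /= ltnn addr0 big_mkord.
apply: eq_bigr => j _; rewrite ltn_ord /=.
rewrite (eq_bigl (fun A => A \in [set A : {set 'I_n} | #|A| == j]%SET)); last first.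
  move=> A /=; rewrite finset.in_set.
  have -> : (inord #|A| == widen_ord (leqnSn n) j) = (#|A| == j).
    by rewrite -val_eqE /= inordK.
  case hA: (#|A| == j); last by rewrite andbF.
  rewrite andbT -properT properEcard finset.subsetT /= cardsT card_ord (eqP hA) ltn_ord.
  done.
rewrite (eq_bigr (fun _ => g j)); last first.
  by move=> A; rewrite finset.in_set => /eqP ->.
by rewrite sumr_const card_draws card_ord mulr_natl.
Qed.

End Comb.

Section Main.
Local Open Scope classical_set_scope.
Local Open Scope ring_scope.
Variable R : realType.

Lemma seq_inj_le (F : int -> R) (h : int -> int) (s : seq int) :
  injective h ->
  (forall t, 0 <= F t) -> finite_set [set t | F t != 0] -> uniq s ->
  \sum_(t <- s) F (h t) <= \sum_(t \in [set: int]) F t.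
Proof.
move=> hi F0 fin us.
rewrite -(big_map h predT F).
apply: seq_le_fsum => //.
by rewrite map_inj_uniq.
Qed.

Lemma lpnorm1E (T : choiceType) (A : T -> R) :
  lpnorm 1 A = \sum_(t \in [set: T]) `|A t|.
Proof.
rewrite -[LHS]expr1 lpnormX //; apply: eq_fsbigr => t _; exact: expr1.
Qed.

Lemma prod_sum_le (n : nat) (r : seq {ffun 'I_n -> int}) (a : 'I_n -> int -> R)
    (M : 'I_n -> R) :
  uniq r -> (forall i u, 0 <= a i u) ->
  (forall i (S : seq int), uniq S -> \sum_(u <- S) a i u <= M i) ->
  \sum_(tau <- r) \prod_(i < n) a i (tau i) <= \prod_(i < n) M i.
Proof.
move=> ur a0 hM.
set S := undup [seq fun_of_fin tau i | tau <- r, i <- enum 'I_n].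
set N := size S.
pose a' (i : 'I_n) (j : 'I_N.+1) := if (j < N)%N then a i (nth 0 S j) else 0.
have a'0 : forall i j, 0 <= a' i j by move=> i j; rewrite /a'; case: ifP.
have sum_a' : forall i, \sum_(j < N.+1) a' i j = \sum_(u <- S) a i u.
  move=> i; rewrite big_ord_recr /= /a' ltnn addr0.
  rewrite (big_nth 0) big_mkord; apply: eq_bigr => j _.
  by rewrite /= ltn_ord.
have step1 : \prod_(i < n) \sum_(j < N.+1) a' i j <= \prod_(i < n) M i.
  apply: ler_prod => i _; rewrite sumr_ge0 //= sum_a'.
  by apply: hM; exact: undup_uniq.
apply: le_trans step1; rewrite bigA_distr_bigA /=.
pose phi (tau : {ffun 'I_n -> int}) : {ffun 'I_n -> 'I_N.+1} :=
  [ffun i => inord (index (tau i) S)].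
have inS : forall tau i, tau \in r -> tau i \in S.
  move=> tau i htau; rewrite mem_undup; apply: (allpairs_f (fun tau i => fun_of_fin tau i)) => //.
  exact: mem_enum.
have idxS : forall tau i, tau \in r -> (index (tau i) S < N)%N.
  by move=> tau i /(inS _ i); rewrite index_mem.
have phiE : forall tau i, tau \in r -> a' i (phi tau i) = a i (tau i).
  move=> tau i htau; rewrite /a' /phi ffunE inordK; last by apply: ltnW; rewrite ltnS idxS.
  by rewrite idxS // nth_index // inS.
have -> : \sum_(tau <- r) \prod_(i < n) a i (tau i) =
          \sum_(g <- map phi r) \prod_(i < n) a' i (g i).
  rewrite big_map; apply: eq_big_seq => tau htau; apply: eq_bigr => i _.
  by rewrite phiE.
apply: sum_sub_le.
- rewrite map_inj_in_uniq // => t1 t2 h1 h2 /ffunP e; apply/ffunP => i.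
  have := e i; rewrite /phi !ffunE => /(congr1 val) /=.
  rewrite !inordK; try by apply: ltnW; rewrite ltnS idxS.
  by apply: (index_inj 0); rewrite ?inS.
- by move=> g _; exact: mem_index_enum.
- exact: index_enum_uniq.
- by move=> g _; apply: prodr_ge0 => i _.
Qed.


Lemma bound1 n (H : {ffun 'I_n -> int} -> R) (z : 'I_n -> int -> R)
    (SH : seq {ffun 'I_n -> int}) (s : seq int) :
  (0 < n)%N -> uniq SH -> fin_supp H -> (forall i, fin_supp (z i)) -> uniq s ->
  \sum_(t <- s) (\sum_(tau <- SH) H tau * \prod_(i < n) z i (t - tau i)) ^+ 2 <=
  (lpnorm 2 H * \prod_(i < n) lpnorm 1 (z i)) ^+ 2.
Proof.
move=> n0 uSH fH fz us.
set M := \prod_(i < n) lpnorm 1 (z i).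
have M0 : 0 <= M by apply: prodr_ge0 => i _; exact: lpnorm_ge0.
pose Q t (tau : {ffun 'I_n -> int}) := \prod_(i < n) `|z i (t - tau i)|.
have Q0 : forall t tau, 0 <= Q t tau by move=> t tau; apply: prodr_ge0.
have finz : forall i, finite_set [set u | `|z i u| != 0].
  by move=> i; apply: sub_finite_set (fz i) => u /=; rewrite normr_eq0.
have hb : forall t, \sum_(tau <- SH) Q t tau <= M.
  move=> t; apply: (@prod_sum_le n SH (fun i u => `|z i (t - u)|)) => // i S uS.
  rewrite lpnorm1E; apply: (@seq_inj_le (fun u => `|z i u|) (fun u => t - u)) => //.
  by move=> u v /addrI /oppr_inj.
have hc : forall tau, \sum_(t <- s) Q t tau <= M.
  move=> tau; pose i0 : 'I_n := Ordinal n0.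
  set P' := \prod_(i < n | i != i0) lpnorm 1 (z i).
  have P'0 : 0 <= P' by apply: prodr_ge0 => i _; exact: lpnorm_ge0.
  apply: (@le_trans _ _ (\sum_(t <- s) `|z i0 (t - tau i0)| * P')).
    apply: ler_sum => t _; rewrite /Q (bigD1 i0) //=.
    apply: ler_wpM2l => //; apply: ler_prod => i _.
    by rewrite normr_ge0 /=; apply: lpnorm_pt.
  rewrite -mulr_suml /M (bigD1 i0) //=; apply: ler_wpM2r => //.
  rewrite lpnorm1E; apply: (@seq_inj_le (fun u => `|z i0 u|) (fun u => u - tau i0)) => //.
  exact: addIr.
have ha : forall t, (\sum_(tau <- SH) H tau * \prod_(i < n) z i (t - tau i)) ^+ 2 <=
     (\sum_(tau <- SH) Q t tau * `|H tau| ^+ 2) * M.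
  move=> t.
  set G := \sum_(tau <- SH) _.
  have e : `|G| <= \sum_(tau <- SH) Q t tau * `|H tau| * 1.
    apply: le_trans (ler_norm_sum _ _ _) _; apply: ler_sum => tau _.
    by rewrite normrM normr_prod mulr1 mulrC.
  apply: (@le_trans _ _ ((\sum_(tau <- SH) Q t tau * `|H tau| * 1) ^+ 2)).
    rewrite -real_normK ?num_real //; apply: lerXn2r => //; rewrite nnegrE //.
    by apply: le_trans e.
  apply: le_trans (@CS_w R _ SH (Q t) (fun tau => `|H tau|) (fun=> 1) (Q0 t)) _.
  apply: ler_wpM2l; first by apply: sumr_ge0 => tau _; rewrite mulr_ge0 ?exprn_ge0.
  apply: le_trans (hb t); apply: ler_sum => tau _; by rewrite expr1n mulr1.
apply: (@le_trans _ _ (\sum_(t <- s) (\sum_(tau <- SH) Q t tau * `|H tau| ^+ 2) * M)).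
  by apply: ler_sum => t _; exact: ha.
rewrite -mulr_suml exchange_big /=.
apply: (@le_trans _ _ ((\sum_(tau <- SH) M * `|H tau| ^+ 2) * M)).
  apply: ler_wpM2r => //; apply: ler_sum => tau _; rewrite -mulr_suml.
  by apply: ler_wpM2r; [exact: exprn_ge0|exact: hc].
rewrite -mulr_sumr.
have hH : \sum_(tau <- SH) `|H tau| ^+ 2 <= lpnorm 2 H ^+ 2.
  rewrite lpnormX //; apply: seq_le_fsum => //; last exact: fin_supp_pow.
have -> : M * (\sum_(tau <- SH) `|H tau| ^+ 2) * M = M ^+ 2 * \sum_(tau <- SH) `|H tau| ^+ 2.
  by rewrite expr2; ring.
rewrite exprMn [X in _ <= X]mulrC; apply: ler_wpM2l => //; exact: sqr_ge0.
Qed.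


Lemma AMGMs (I : finType) (A : {set I}) (c : I -> R) :
  (forall i, 0 <= c i) -> (0 < #|A|)%N ->
  \prod_(i in A) c i <= (\sum_(i in A) c i ^+ #|A|) / #|A|%:R.
Proof. exact: AMGM. Qed.

Definition zA {n} (x y : int -> R) (A : {set 'I_n}) (i : 'I_n) (u : int) : R :=
  if i \in A then x u else y u.

Lemma hbound n (x y : int -> R) (A : {set 'I_n}) (tau : {ffun 'I_n -> int})
    (s : seq int) :
  fin_supp x -> fin_supp y -> A != [set: 'I_n]%SET -> uniq s ->
  \sum_(t <- s) (\prod_(i < n) zA x y A i (t - tau i)) ^+ 2 <=
  (lpnorm (2 * #|A|) x ^+ #|A| * lpnorm (2 * (n - #|A|)) y ^+ (n - #|A|)) ^+ 2.
Proof.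
move=> fx fy AT us.
set k := #|A|; set m := (n - k)%N.
have hm : #|~: A| = m.
  have h := cardsC A; rewrite card_ord in h.
  have hA : (#|A| <= n)%N by have := max_card (mem A); rewrite card_ord.
  by apply/eqP; rewrite /m /k -(eqn_add2l #|A|) h subnKC.
have m0 : (0 < m)%N.
  move: AT; rewrite -properT => /proper_card; rewrite cardsT card_ord /m /k.
  by rewrite subn_gt0.
set lx := lpnorm (2 * k) x ^+ k.
set ly := lpnorm (2 * m) y ^+ m.
have lx0 : 0 <= lx by rewrite exprn_ge0 // lpnorm_ge0.
have ly0 : 0 <= ly by rewrite exprn_ge0 // lpnorm_ge0.
pose X t := (\prod_(i in A) x (t - tau i) ^+ 2)%R.
pose Y t := (\prod_(i in ~: A) y (t - tau i) ^+ 2)%R.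
have XY : forall t, (\prod_(i < n) zA x y A i (t - tau i)) ^+ 2 = X t * Y t.
  move=> t; rewrite -prodrXl (bigID (fun i => i \in A)) /=; congr (_ * _).
    by apply: eq_bigr => i hi; rewrite /zA hi.
  rewrite /Y; apply: eq_big => [i|i hi]; first by rewrite finset.in_setC.
  by rewrite /zA (negbTE hi).
have hX : forall t, X t <= lx ^+ 2.
  move=> t; rewrite /lx exprAC /k -prodr_const; apply: ler_prod => i hi.
  rewrite sqr_ge0 /= -real_normK ?num_real //; apply: lerXn2r; rewrite ?nnegrE ?lpnorm_ge0 //.
  apply: lpnorm_pt => //; rewrite muln_gt0 /= /k; apply/card_gt0P; by exists i.
have hY : \sum_(t <- s) Y t <= ly ^+ 2.
  apply: (@le_trans _ _ (\sum_(t <- s) (\sum_(i in ~: A) (y (t - tau i) ^+ 2) ^+ m) / m%:R)).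
    apply: ler_sum => t _; rewrite -hm; apply: AMGMs; first by move=> i; exact: sqr_ge0.
    by rewrite hm.
  rewrite -mulr_suml exchange_big /=.
  have hyi : forall i, \sum_(t <- s) (y (t - tau i) ^+ 2) ^+ m <= ly ^+ 2.
    move=> i; rewrite /ly -exprM (mulnC m 2) lpnormX ?muln_gt0 //.
    apply: le_trans (@seq_inj_le (fun u => `|y u| ^+ (2 * m)) (fun u => u - tau i) s (addIr _) _ _ us).
    - apply: ler_sum => t _; rewrite exprM real_normK ?num_real //.
    - by move=> u; rewrite exprn_ge0.
    - by apply: fin_supp_pow; rewrite ?muln_gt0.
  apply: (@le_trans _ _ ((\sum_(i in ~: A) ly ^+ 2) / m%:R)).
    by apply: ler_wpM2r; [rewrite invr_ge0 ler0n | apply: ler_sum => i _; exact: hyi].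
  rewrite sumr_const hm -[ly ^+ 2 *+ m]mulr_natr mulfK // pnatr_eq0 -lt0n m0.
  done.
under eq_bigr do rewrite XY.
apply: (@le_trans _ _ (\sum_(t <- s) lx ^+ 2 * Y t)).
  apply: ler_sum => t _; apply: ler_wpM2r; first by apply: prodr_ge0 => i _; exact: sqr_ge0.
  exact: hX.
by rewrite -mulr_sumr exprMn; apply: ler_wpM2l => //; exact: sqr_ge0.
Qed.


Lemma bound2 n (H : {ffun 'I_n -> int} -> R) (x y : int -> R) (A : {set 'I_n})
    (SH : seq {ffun 'I_n -> int}) (s : seq int) :
  uniq SH -> fin_supp H -> fin_supp x -> fin_supp y -> A != [set: 'I_n]%SET -> uniq s ->
  \sum_(t <- s) (\sum_(tau <- SH) H tau * \prod_(i < n) zA x y A i (t - tau i)) ^+ 2 <=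
  (lpnorm 1 H * (lpnorm (2 * #|A|) x ^+ #|A| * lpnorm (2 * (n - #|A|)) y ^+ (n - #|A|))) ^+ 2.
Proof.
move=> uSH fH fx fy AT us.
set B := lpnorm (2 * #|A|) x ^+ #|A| * lpnorm (2 * (n - #|A|)) y ^+ (n - #|A|).
have B0 : 0 <= B by rewrite mulr_ge0 // exprn_ge0 // lpnorm_ge0.
apply: le_trans (@MinkN R _ SH xpredT
   (fun tau t => H tau * \prod_(i < n) zA x y A i (t - tau i))
   (fun tau => `|H tau| * B) s _ _) _.
- by move=> tau _; rewrite mulr_ge0.
- move=> tau _ /=; under eq_bigr do rewrite exprMn.
  rewrite -mulr_sumr exprMn real_normK ?num_real //; apply: ler_wpM2l; first exact: sqr_ge0.
  exact: hbound.
apply: lerXn2r.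
- by rewrite nnegrE; apply: sumr_ge0 => tau _; rewrite mulr_ge0.
- by rewrite nnegrE mulr_ge0 // lpnorm_ge0.
rewrite -mulr_suml; apply: ler_wpM2r => //; rewrite lpnorm1E.
apply: seq_le_fsum => //.
by apply: sub_finite_set fH => u /=; rewrite normr_eq0.
Qed.

Lemma le_lpnorm2 (D : int -> R) (c : R) : 0 <= c ->
  (forall s : seq int, uniq s -> \sum_(t <- s) D t ^+ 2 <= c ^+ 2) ->
  lpnorm 2 D <= c.
Proof.
move=> c0 h; rewrite -(ler_pXn2r (isT : (0 < 2)%N)) ?nnegrE ?lpnorm_ge0 //.
rewrite lpnormX //; apply: fsum_le_seq => s us.
have -> : \sum_(t <- s) `|D t| ^+ 2 = \sum_(t <- s) D t ^+ 2 by apply: eq_bigr => t _; rewrite real_normK ?num_real.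
exact: h.
Qed.

Lemma finish n (c : R) (g : nat -> R) (b : {set 'I_n} -> R) (D : int -> R) :
  0 <= c -> (forall k, 0 <= g k) -> (forall A, b A = c * g #|A|) ->
  (forall s, uniq s -> \sum_(t <- s) D t ^+ 2 <=
       (\sum_(A : {set 'I_n} | A != [set: 'I_n]%SET) b A) ^+ 2) ->
  lpnorm 2 D <= c * \sum_(0 <= k < n) (expR 1 * n%:R / k%:R) ^+ k * g k.
Proof.
move=> c0 g0 bE h.
apply: le_trans (@le_lpnorm2 D _ _ h) _.
  by apply: sumr_ge0 => A _; rewrite bE mulr_ge0.
under eq_bigr do rewrite bE.
rewrite -mulr_sumr (@count_sets R n g); apply: ler_wpM2l => //.
apply: ler_sum => k _; apply: ler_wpM2r => //; exact: binom_bound.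
Qed.

Lemma card_compl n (A : {set 'I_n}) : #|~: A| = (n - #|A|)%N.
Proof.
have h := cardsC A; rewrite card_ord in h.
have hA : (#|A| <= n)%N by have := max_card (mem A); rewrite card_ord.
by apply/eqP; rewrite -(eqn_add2l #|A|) h subnKC.
Qed.

Lemma prod_zA n (f : (int -> R) -> R) (x y : int -> R) (A : {set 'I_n}) :
  \prod_(i < n) f (zA x y A i) = f x ^+ #|A| * f y ^+ (n - #|A|).
Proof.
rewrite (bigID (fun i => i \in A)) /= -card_compl -!prodr_const; congr (_ * _).
  by apply: eq_bigr => i hi; congr f; apply: funext => u; rewrite /zA hi.
apply: eq_big => [i|i hi]; first by rewrite finset.in_setC.
by congr f; apply: funext => u; rewrite /zA (negbTE hi).
Qed.

End Main.

Theorem lemma23 (R : realType) (n : nat) (H : {ffun 'I_n -> int} -> R)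
    (x y : int -> R) :
  (1 <= n)%N -> fin_supp H -> fin_supp x -> fin_supp y ->
  lpnorm 2 (fun t => convpow H (x \+ y) t - convpow H x t) <=
  Num.min
    (lpnorm 2 H * \sum_(0 <= k < n)
        (expR 1 * n%:R / k%:R) ^+ k * lpnorm 1 x ^+ k * lpnorm 1 y ^+ (n - k))
    (lpnorm 1 H * \sum_(0 <= k < n)
        (expR 1 * n%:R / k%:R) ^+ k * lpnorm (2 * k) x ^+ k
          * lpnorm (2 * (n - k)) y ^+ (n - k)).
Proof.
move=> n1 fH fx fy.
pose SH := fset_set [set tau | H tau != 0]%classic.
have uSH : uniq SH by exact: fset_uniq.
have convE : forall zs t, convn H zs t =
    \sum_(tau <- SH) H tau * \prod_(i < n) zs i (t - tau i).
  move=> zs t; rewrite /convn (fsbigTE SH) // => tau.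
  rewrite (in_fset_set fH) mem_setE /= negbK => /eqP ->; exact: mul0r.
have D : forall t, convpow H (x \+ y) t - convpow H x t =
   \sum_(A : {set 'I_n} | A != [set: 'I_n]%SET)
     \sum_(tau <- SH) H tau * \prod_(i < n) zA R x y A i (t - tau i).
  move=> t; rewrite /convpow !convE -sumrB exchange_big /=; apply: eq_bigr => tau _.
  rewrite -mulrBr -mulr_sumr; congr (_ * _).
  have e : \prod_(i < n) (x (t - tau i) + y (t - tau i)) =
      \sum_(A : {set 'I_n}) \prod_(i < n) zA R x y A i (t - tau i).
    by rewrite bigA_distr.
  rewrite /= e (bigD1 [set: 'I_n]%SET) //=.
  have -> : \prod_(i < n) zA R x y [set: 'I_n]%SET i (t - tau i) = \prod_(i < n) x (t - tau i).
    by apply: eq_bigr => i _; rewrite /zA finset.in_setT.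
  by rewrite addrC addrK.
have fz : forall (A : {set 'I_n}) (i : 'I_n), fin_supp (zA R x y A i).
  by move=> A i; rewrite /zA; case: (i \in A).
rewrite le_min; apply/andP; split.
- apply: (@le_trans _ _ (lpnorm 2 H * \sum_(0 <= k < n) (expR 1 * n%:R / k%:R) ^+ k *
      (lpnorm 1 x ^+ k * lpnorm 1 y ^+ (n - k)))); last first.
    by apply: ler_wpM2l; [exact: lpnorm_ge0 | apply: ler_sum => k _; rewrite mulrA].
  apply: (@finish R n (lpnorm 2 H) (fun k => lpnorm 1 x ^+ k * lpnorm 1 y ^+ (n - k))
     (fun A => lpnorm 2 H * \prod_(i < n) lpnorm 1 (zA R x y A i))).
  + exact: lpnorm_ge0.
  + by move=> k; rewrite mulr_ge0 // exprn_ge0 // lpnorm_ge0.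
  + by move=> A; rewrite (@prod_zA R n (fun f => lpnorm 1 f)).
  move=> s us; under eq_bigr do rewrite D.
  apply: (@MinkN R _ (index_enum _) _ (fun A t => \sum_(tau <- SH) H tau * \prod_(i < n) zA R x y A i (t - tau i))).
    by move=> A _; rewrite mulr_ge0 ?lpnorm_ge0 // prodr_ge0 // => i _; exact: lpnorm_ge0.
  by move=> A _; apply: bound1.
- apply: (@le_trans _ _ (lpnorm 1 H * \sum_(0 <= k < n) (expR 1 * n%:R / k%:R) ^+ k *
      (lpnorm (2 * k) x ^+ k * lpnorm (2 * (n - k)) y ^+ (n - k)))); last first.
    by apply: ler_wpM2l; [exact: lpnorm_ge0 | apply: ler_sum => k _; rewrite mulrA].
  apply: (@finish R n (lpnorm 1 H)
     (fun k => lpnorm (2 * k) x ^+ k * lpnorm (2 * (n - k)) y ^+ (n - k))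
     (fun A => lpnorm 1 H * (lpnorm (2 * #|A|) x ^+ #|A| * lpnorm (2 * (n - #|A|)) y ^+ (n - #|A|)))).
  + exact: lpnorm_ge0.
  + by move=> k; rewrite mulr_ge0 // exprn_ge0 // lpnorm_ge0.
  + by [].
  move=> s us; under eq_bigr do rewrite D.
  apply: (@MinkN R _ (index_enum _) _ (fun A t => \sum_(tau <- SH) H tau * \prod_(i < n) zA R x y A i (t - tau i))).
    by move=> A _; rewrite mulr_ge0 ?lpnorm_ge0 // mulr_ge0 // exprn_ge0 // lpnorm_ge0.
  by move=> A hA; apply: bound2.
Qed.
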